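(* Let $(\mathcal{P},\cdot)$ be an admissible Poisson algebra and $\varphi:\mathcal{P}\times\mathcal{P}\to\mathcal{P}$ bilinear with symmetric part $\varphi_s$ and skew-symmetric part $\varphi_a$. If $\delta^2_{\mathcal{P}}\varphi=0$, then $\delta_H\varphi_s=0$ (a Harrison $2$-cocycle of $\mathcal{A}_{\mathcal{P}}$) and $\delta_C\varphi_a=0$ (a Chevalley $2$-cocycle of $\mathfrak{g}_{\mathcal{P}}$).
   Context: $\mathbb{K}$ is a field of characteristic different from $2$ and $3$. Associator: $A(X,Y,Z)=(X\cdot Y)\cdot Z-X\cdot(Y\cdot Z)$. An admissible Poisson algebra is a $\mathbb{K}$-vector space $\mathcal{P}$ with a bilinear product $\cdot$ satisfying $3A(X,Y,Z)=(X\cdot Z)\cdot Y+(Y\cdot Z)\cdot X-(Y\cdot X)\cdot Z-(Z\cdot X)\cdot Y$; $\{X,Y\}=\frac12(X\cdot Y-Y\cdot X)$, $X\bullet Y=\frac12(X\cdot Y+Y\cdot X)$, $\mathfrak{g}_{\mathcal{P}}=(\mathcal{P},\{\,,\,\})$, $\mathcal{A}_{\mathcal{P}}=(\mathcal{P},\bullet)$. $\varphi_a(X,Y)=\frac12(\varphi(X,Y)-\varphi(Y,X))$, $\varphi_s(X,Y)=\frac12(\varphi(X,Y)+\varphi(Y,X))$. For a bilinear $\varphi$: $\delta^2_{\mathcal{P}}\varphi(X,Y,Z)=3\varphi(X\cdot Y,Z)-3\varphi(X,Y\cdot Z)-\varphi(X\cdot Z,Y)-\varphi(Y\cdot Z,X)+\varphi(Y\cdot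 X,Z)+\varphi(Z\cdot X,Y)+3\varphi(X,Y)\cdot Z-3X\cdot\varphi(Y,Z)-\varphi(X,Z)\cdot Y-\varphi(Y,Z)\cdot X+\varphi(Y,X)\cdot Z+\varphi(Z,X)\cdot Y$. For $\psi$ bilinear: $\delta_C\psi(X,Y,Z)=\{\psi(X,Y),Z\}+\{\psi(Y,Z),X\}+\{\psi(Z,X),Y\}+\psi(\{X,Y\},Z)+\psi(\{Y,Z\},X)+\psi(\{Z,X\},Y)$ and $\delta_H\psi(X,Y,Z)=\psi(X,Y)\bullet Z-X\bullet\psi(Y,Z)+\psi(X\bullet Y,Z)-\psi(X,Y\bullet Z)$. *)

(* Defs.v *)
From HB Require Import structures.
From mathcomp Require Import all_boot all_algebra.
Set Implicit Arguments. Unset Strict Implicit. Unset Printing Implicit Defensive.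
Import GRing.Theory.
Local Open Scope ring_scope.

Definition bilinear_map (K : fieldType) (P : lmodType K) (m : P -> P -> P) :=
  (forall a x y z, m (a *: x + y) z = a *: m x z + m y z) /\
  (forall a x y z, m x (a *: y + z) = a *: m x y + m x z).

Definition assoc (K : fieldType) (P : lmodType K) (m : P -> P -> P) (X Y Z : P) :=
  m (m X Y) Z - m X (m Y Z).

Definition admissible_poisson (K : fieldType) (P : lmodType K) (m : P -> P -> P) :=
  forall X Y Z : P,
    assoc m X Y Z *+ 3 =
    m (m X Z) Y + m (m Y Z) X - m (m Y X) Z - m (m Z X) Y.

Definition pbracket (K : fieldType) (P : lmodType K) (m : P -> P -> P) (X Y : P) :=
  (2%:R : K)^-1 *: (m X Y - m Y X).
Definition pbullet (K : fieldType) (P : lmodType K) (m : P -> P -> P) (X Y : P) :=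
  (2%:R : K)^-1 *: (m X Y + m Y X).

Definition skew_part (K : fieldType) (P : lmodType K) (phi : P -> P -> P) (X Y : P) :=
  (2%:R : K)^-1 *: (phi X Y - phi Y X).
Definition sym_part (K : fieldType) (P : lmodType K) (phi : P -> P -> P) (X Y : P) :=
  (2%:R : K)^-1 *: (phi X Y + phi Y X).

Definition delta2 (K : fieldType) (P : lmodType K) (m : P -> P -> P)
    (phi : P -> P -> P) (X Y Z : P) : P :=
  phi (m X Y) Z *+ 3 - phi X (m Y Z) *+ 3 - phi (m X Z) Y - phi (m Y Z) X
  + phi (m Y X) Z + phi (m Z X) Y
  + m (phi X Y) Z *+ 3 - m X (phi Y Z) *+ 3 - m (phi X Z) Y - m (phi Y Z) X
  + m (phi Y X) Z + m (phi Z X) Y.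

Definition deltaC (K : fieldType) (P : lmodType K) (m : P -> P -> P)
    (psi : P -> P -> P) (X Y Z : P) : P :=
  let br := pbracket m in
  br (psi X Y) Z + br (psi Y Z) X + br (psi Z X) Y
  + psi (br X Y) Z + psi (br Y Z) X + psi (br Z X) Y.

Definition deltaH (K : fieldType) (P : lmodType K) (m : P -> P -> P)
    (psi : P -> P -> P) (X Y Z : P) : P :=
  let bu := pbullet m in
  bu (psi X Y) Z - bu X (psi Y Z) + psi (bu X Y) Z - psi X (bu Y Z).

(* Main.v *)
Require Import Defs.
From HB Require Import structures.
From mathcomp Require Import all_boot all_algebra.
From mathcomp Require Import ring.
Import GRing.Theory.
Local Open Scope ring_scope.
Section SQ.
Variables (K : fieldType) (V : lmodType K).
Definition sqz := (K * V)%type.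
HB.instance Definition _ := GRing.Zmodule.on sqz.
Definition sqone : sqz := (1, 0).
Definition sqmul (u v : sqz) : sqz := (u.1 * v.1, u.1 *: v.2 + v.1 *: u.2).
Lemma sqmulA : associative sqmul.
Proof. move=> [a u] [b v] [c w]; rewrite /sqmul /=; congr pair; first by rewrite mulrA.
by rewrite !scalerDr !scalerA addrA (mulrC c a) (mulrC c b).
Qed.
Lemma sqmulC : commutative sqmul.
Proof. by move=> [a u] [b v]; rewrite /sqmul /= mulrC addrC. Qed.
Lemma sqmul1 : left_id sqone sqmul.
Proof. by move=> [a u]; rewrite /sqmul /= mul1r scale1r scaler0 addr0. Qed.
Lemma sqmulD : left_distributive sqmul +%R.
Proof. move=> [a u] [b v] [c w]; rewrite /sqmul /=; congr pair; first by rewrite mulrDl.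
by rewrite scalerDl scalerDr addrACA. Qed.
Lemma sqone0 : sqone != 0.
Proof. by apply/eqP => -[] /eqP; rewrite oner_eq0. Qed.
HB.instance Definition _ := GRing.Zmodule_isComNzRing.Build sqz sqmulA sqmulC sqmul1 sqmulD sqone0.
Definition iv (v : V) : sqz := (0, v).
Definition ck (k : K) : sqz := (k, 0).
Lemma ivD u v : iv (u + v) = iv u + iv v. Proof. rewrite /iv; apply: (@eq_trans _ _ (0+0, u+v)); first by rewrite addr0. by []. Qed.
Lemma ivN u : iv (- u) = - iv u. Proof. rewrite /iv; apply: (@eq_trans _ _ (-0, -u)); first by rewrite oppr0. by []. Qed.
Lemma ivB u v : iv (u - v) = iv u - iv v. Proof. by rewrite ivD ivN. Qed.
Lemma ivMn u n : iv (u *+ n) = iv u *+ n.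
Proof. elim: n => [|n IH]; first by []. by rewrite !mulrS ivD IH. Qed.
Lemma ivZ k u : iv (k *: u) = ck k * iv u.
Proof. by rewrite /iv /ck; rewrite [RHS]/(GRing.mul _ _) /= /sqmul /= mulr0 scale0r addr0. Qed.
Lemma ckM a b : ck (a * b) = ck a * ck b.
Proof. by rewrite /ck [RHS]/(GRing.mul _ _) /= /sqmul /= !scaler0 addr0. Qed.
Lemma ckD a b : ck (a + b) = ck a + ck b.
Proof. rewrite /ck; apply: (@eq_trans _ _ (a+b, 0+0)); first by rewrite addr0. by []. Qed.
Lemma ckn n : ck n%:R = n%:R.
Proof. elim: n => [|n IH]; first by []. by rewrite !mulrS ckD IH. Qed.
Lemma iv_inj : injective iv. Proof. by move=> u v []. Qed.
End SQ.

Section Bil.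
Variables (K : fieldType) (P : lmodType K) (f : P -> P -> P).
Hypothesis hf : bilinear_map f.
Lemma f0l z : f 0 z = 0.
Proof. have := hf.1 1 0 0 z. rewrite !scale1r !addr0 => /(congr1 (fun t => t - f 0 z)). by rewrite /= subrr addrK => /esym. Qed.
Lemma f0r z : f z 0 = 0.
Proof. have := hf.2 1 z 0 0. rewrite !scale1r !addr0 => /(congr1 (fun t => t - f z 0)). by rewrite /= subrr addrK => /esym. Qed.
Lemma fDl x y z : f (x + y) z = f x z + f y z.
Proof. by have := hf.1 1 x y z; rewrite !scale1r. Qed.
Lemma fDr x y z : f z (x + y) = f z x + f z y.
Proof. by have := hf.2 1 z x y; rewrite !scale1r. Qed.
Lemma fZl a x z : f (a *: x) z = a *: f x z.
Proof. by have := hf.1 a x 0 z; rewrite !addr0 f0l addr0. Qed.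
Lemma fZr a x z : f z (a *: x) = a *: f z x.
Proof. by have := hf.2 a z x 0; rewrite !addr0 f0r addr0. Qed.
Lemma fNl x z : f (- x) z = - f x z.
Proof. by rewrite -scaleN1r fZl scaleN1r. Qed.
Lemma fNr x z : f z (- x) = - f z x.
Proof. by rewrite -scaleN1r fZr scaleN1r. Qed.
Lemma fMnl x n z : f (x *+ n) z = f x z *+ n.
Proof. elim: n => [|n IH]; first by rewrite !mulr0n f0l. by rewrite !mulrS fDl IH. Qed.
Lemma fMnr x n z : f z (x *+ n) = f z x *+ n.
Proof. elim: n => [|n IH]; first by rewrite !mulr0n f0r. by rewrite !mulrS fDr IH. Qed.
End Bil.

Theorem mainTheorem16 (K : fieldType) (P : lmodType K) (m phi : P -> P -> P) :
  (2%:R : K) != 0 -> (3%:R : K) != 0 ->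
  bilinear_map m -> admissible_poisson m ->
  bilinear_map phi ->
  (forall X Y Z, delta2 m phi X Y Z = 0) ->
  (forall X Y Z, deltaH m (sym_part phi) X Y Z = 0) /\
  (forall X Y Z, deltaC m (skew_part phi) X Y Z = 0).
Proof.
move=> h2 h3 hm _ hp hd.
have h12 : (12%:R : K) != 0.
  by rewrite (_ : 12 = 2 * 2 * 3)%N // !natrM !mulf_neq0.
split=> X Y Z.
- have key : (12%:R : K) *: deltaH m (sym_part phi) X Y Z =
    ((2%:R : K)^-1 * (2%:R)^-1 * 4%:R) *:
    (delta2 m phi X Y Z + delta2 m phi X Z Y - delta2 m phi Z X Y - delta2 m phi Z Y X).
    apply: (@iv_inj K P).
    rewrite /deltaH /delta2 /pbullet /sym_part.
    rewrite !(@fDl _ _ _ hm, @fDr _ _ _ hm, @fZl _ _ _ hm, @fZr _ _ _ hm, @fNl _ _ _ hm, @fNr _ _ _ hm, @fMnl _ _ _ hm, @fMnr _ _ _ hm).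
    rewrite !(@fDl _ _ _ hp, @fDr _ _ _ hp, @fZl _ _ _ hp, @fZr _ _ _ hp, @fNl _ _ _ hp, @fNr _ _ _ hp, @fMnl _ _ _ hp, @fMnr _ _ _ hp).
    rewrite !(ivD, ivN, ivMn, ivZ, ckM, ckn).
    ring.
  move: key; rewrite !hd !(subrr, sub0r, oppr0, addr0, subr0) scaler0 => /eqP.
  by rewrite scaler_eq0 (negPf h12) => /eqP.
- have key : (12%:R : K) *: deltaC m (skew_part phi) X Y Z =
    ((2%:R : K)^-1 * (2%:R)^-1 * 4%:R) *:
    (delta2 m phi X Y Z - delta2 m phi X Z Y - delta2 m phi Y X Z
     + delta2 m phi Y Z X + delta2 m phi Z X Y - delta2 m phi Z Y X).
    apply: (@iv_inj K P).
    rewrite /deltaC /delta2 /pbracket /skew_part.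
    rewrite !(@fDl _ _ _ hm, @fDr _ _ _ hm, @fZl _ _ _ hm, @fZr _ _ _ hm, @fNl _ _ _ hm, @fNr _ _ _ hm, @fMnl _ _ _ hm, @fMnr _ _ _ hm).
    rewrite !(@fDl _ _ _ hp, @fDr _ _ _ hp, @fZl _ _ _ hp, @fZr _ _ _ hp, @fNl _ _ _ hp, @fNr _ _ _ hp, @fMnl _ _ _ hp, @fMnr _ _ _ hp).
    rewrite !(ivD, ivN, ivMn, ivZ, ckM, ckn).
    ring.
  move: key; rewrite !hd !(subrr, sub0r, oppr0, addr0, subr0) scaler0 => /eqP.
  by rewrite scaler_eq0 (negPf h12) => /eqP.
Qed.
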